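(* Let $D=\{z\in\mathbb{C}:|z|<1\}$ and $\mathbb{T}=\partial D$. Let $A_0(D)$ be the space of functions $f:\overline{D}\to\mathbb{C}$ that are continuous on $\overline{D}$, holomorphic on $D$ and satisfy $f(0)=0$, endowed with the topology of uniform convergence on $\overline{D}$. Then the set of functions $f\in A_0(D)$ such that $f\restriction_{\mathbb{T}}\in Z$ is a dense $G_\delta$ subset of $A_0(D)$.
   Context: A function $g$ on $\mathbb{T}$ is identified with the $2\pi$-periodic function $y\mapsto g(e^{iy})$ on $\mathbb{R}$, and one writes $g(y)$ for $g(e^{iy})$. The class $Z$ consists of all continuous $f:\mathbb{T}\to\mathbb{C}$ such that for every $\theta\in\mathbb{R}$ $$\limsup_{y\to\theta^+}\left|\frac{\operatorname{Re}f(y)-\operatorname{Re}f(\theta)}{y-\theta}\right|=+\infty\quad\text{and}\quad \limsup_{y\to\theta^+}\left|\frac{\operatorname{Im}f(y)-\operatorname{Im}f(\theta)}{y-\theta}\right|=+\infty.$$ *)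

(* Defs.v *)
From Stdlib Require Import Reals.
From Coquelicot Require Import Coquelicot.
Open Scope R_scope.

Definition closed_disk (z : C) : Prop := Cmod z <= 1.
Definition open_disk (z : C) : Prop := Cmod z < 1.

Definition continuous_on_closed_disk (f : C -> C) : Prop :=
  forall z, closed_disk z ->
    forall eps : R, 0 < eps -> exists delta : R, 0 < delta /\
      forall w, closed_disk w -> Cmod (Cminus w z) < delta ->
        Cmod (Cminus (f w) (f z)) < eps.

Definition holomorphic_on_open_disk (f : C -> C) : Prop :=
  forall z, open_disk z ->
    exists l : C, @is_derive C_AbsRing C_NormedModule f z l.

(* A_0(D): only the values on the closed disk matter. *)
Definition A0 (f : C -> C) : Prop :=
  continuous_on_closed_disk f /\ holomorphic_on_open_disk f /\ f (0, 0) = (0, 0).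

Definition on_circle (g : C -> C) (y : R) : C := g (cos y, sin y).

Definition limsup_right_infinite (u : R -> R) (theta : R) : Prop :=
  forall (M delta : R), 0 < delta ->
    exists y, theta < y < theta + delta /\
      M < Rabs ((u y - u theta) / (y - theta)).

(* The class Z (for functions g on T, identified with y |-> g(e^{iy})). *)
Definition in_Z (g : C -> C) : Prop :=
  (forall y, continuity_pt (fun t => Re (on_circle g t)) y /\
             continuity_pt (fun t => Im (on_circle g t)) y) /\
  forall theta : R,
    limsup_right_infinite (fun y => Re (on_circle g y)) theta /\
    limsup_right_infinite (fun y => Im (on_circle g y)) theta.

Definition open_in_A0 (U : (C -> C) -> Prop) : Prop :=
  forall f, A0 f -> U f ->
    exists eps : R, 0 < eps /\
      forall g, A0 g ->
        (forall z, closed_disk z -> Cmod (Cminus (g z) (f z)) < eps) -> U g.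

Definition dense_in_A0 (S : (C -> C) -> Prop) : Prop :=
  forall f, A0 f -> forall eps : R, 0 < eps ->
    exists g, A0 g /\ S g /\
      forall z, closed_disk z -> Cmod (Cminus (g z) (f z)) < eps.

Definition G_delta_in_A0 (S : (C -> C) -> Prop) : Prop :=
  exists U : nat -> ((C -> C) -> Prop),
    (forall n, open_in_A0 (U n)) /\
    forall f, A0 f -> (S f <-> forall n, U n f).

(* Main.v *)
Require Import Defs.
From Stdlib Require Import Reals Lra Lia Psatz ZArith ClassicalEpsilon Classical.
From Coquelicot Require Import Coquelicot.
Open Scope R_scope.

Lemma Cmod_le_sum (a b : R) : Cmod (a, b) <= Rabs a + Rabs b.
Proof.
  unfold Cmod; simpl.
  rewrite <- (sqrt_Rsqr (Rabs a + Rabs b)) by (pose proof (Rabs_pos a); pose proof (Rabs_pos b); lra).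
  apply sqrt_le_1_alt.
  unfold Rsqr. rewrite !Rmult_1_r.
  pose proof (Rabs_pos a); pose proof (Rabs_pos b).
  replace (a*a) with (Rabs a * Rabs a) by (rewrite <- Rabs_mult; apply Rabs_pos_eq; nra).
  replace (b*b) with (Rabs b * Rabs b) by (rewrite <- Rabs_mult; apply Rabs_pos_eq; nra).
  nra.
Qed.

Lemma Re_le_Cmod (z : C) : Rabs (fst z) <= Cmod z.
Proof. apply re_le_Cmod. Qed.

Lemma Im_le_Cmod (z : C) : Rabs (snd z) <= Cmod z.
Proof.
  destruct z as [a b]. unfold Cmod; simpl.
  rewrite <- sqrt_Rsqr_abs. apply sqrt_le_1_alt. unfold Rsqr. nra.
Qed.

Lemma Cmod_minus_sym (a b : C) : Cmod (Cminus a b) = Cmod (Cminus b a).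
Proof.
  replace (Cminus a b) with (Copp (Cminus b a)) by (unfold Cminus, Copp, Cplus; destruct a, b; simpl; f_equal; ring).
  apply Cmod_opp.
Qed.

Lemma Cmod_tri3 (a b c : C) : Cmod (Cminus a c) <= Cmod (Cminus a b) + Cmod (Cminus b c).
Proof.
  replace (Cminus a c) with (Cplus (Cminus a b) (Cminus b c)).
  apply Cmod_triangle.
  destruct a, b, c; unfold Cminus, Cplus, Copp; simpl; f_equal; ring.
Qed.

Lemma continuity_pt_eps (h : R -> R) (x : R) :
  (forall eps, 0 < eps -> exists delta, 0 < delta /\
     forall y, Rabs (y - x) < delta -> Rabs (h y - h x) < eps) ->
  continuity_pt h x.
Proof.
  intros H eps Heps. destruct (H eps Heps) as [d [Hd H2]].
  exists d; split; auto. intros y [_ Hy]. apply H2. exact Hy.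
Qed.

Lemma sqrt2_lt_2 : sqrt 2 < 2.
Proof.
  replace 2 with (sqrt 4) at 2. apply sqrt_lt_1_alt. lra.
  replace 4 with (Rsqr 2) by (unfold Rsqr; lra). apply sqrt_Rsqr. lra.
Qed.

Lemma locally_C (z : C) (P : C -> Prop) :
  (exists d, 0 < d /\ forall w, Cmod (Cminus w z) < d -> P w) -> locally z P.
Proof.
  intros [d [Hd H]]. exists (mkposreal (d/2) ltac:(lra)). intros y Hy.
  apply H. apply C_NormedModule_mixin_compat2 in Hy. simpl in Hy.
  pose proof sqrt2_lt_2. pose proof (sqrt_pos 2).
  change (minus y z) with (Cminus y z) in Hy. nra.
Qed.

Lemma locally_C_inv (z : C) (P : C -> Prop) :
  locally z P -> exists d, 0 < d /\ forall w, Cmod (Cminus w z) < d -> P w.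
Proof.
  intros [e He]. exists e. split. apply cond_pos. intros w Hw.
  apply He. apply C_NormedModule_mixin_compat1. exact Hw.
Qed.

Lemma sin_le_id (x : R) : 0 <= x -> sin x <= x.
Proof.
  intros Hx. destruct (Rle_lt_dec x PI) as [Hp|Hp].
  - destruct (sin_bound x 0 Hx Hp) as [_ H].
    assert (E : sin_approx x (2 * (0 + 1)) = x - x^3/6 + x^5/120).
    { unfold sin_approx, sin_term. simpl. field. }
    rewrite E in H.
    pose proof PI_4.
    assert (x^5/120 <= x^3/6).
    { assert (x*x <= 16) by nra. 
      assert (0 <= x^3) by (apply pow_le; lra).
      replace (x^5) with (x^3 * (x*x)) by ring. nra. }
    lra.
  - pose proof (SIN_bound x). pose proof PI_RGT_0. pose proof PI2_1. lra.
Qed.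

Lemma Rabs_sin_le (x : R) : Rabs (sin x) <= Rabs x.
Proof.
  assert (K : forall y, 0 <= y -> Rabs (sin y) <= y).
  { intros y Hy. pose proof (sin_le_id y Hy).
    destruct (Rle_lt_dec y PI).
    - assert (0 <= sin y) by (apply sin_ge_0; lra). rewrite Rabs_pos_eq; lra.
    - pose proof (SIN_bound y). pose proof PI_RGT_0. pose proof PI2_1.
      apply Rabs_le. lra. }
  destruct (Rle_dec 0 x).
  - rewrite (Rabs_pos_eq x) by lra. apply K; lra.
  - rewrite <- (Ropp_involutive x). rewrite sin_neg, Rabs_Ropp, Rabs_Ropp.
    rewrite (Rabs_pos_eq (-x)) by lra. apply K; lra.
Qed.

Lemma Cmod_cis (t : R) : Cmod (cos t, sin t) = 1.
Proof.
  unfold Cmod; simpl. replace (cos t * (cos t * 1) + sin t * (sin t * 1)) with 1.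
  apply sqrt_1. pose proof (sin2_cos2 t). unfold Rsqr in H. lra.
Qed.

Lemma closed_disk_cis (t : R) : closed_disk (cos t, sin t).
Proof. unfold closed_disk. rewrite Cmod_cis. lra. Qed.

Lemma Cmod_cis_diff (y t : R) :
  Cmod (Cminus (cos y, sin y) (cos t, sin t)) <= Rabs (y - t).
Proof.
  unfold Cminus, Cplus, Copp, Cmod; simpl.
  set (h := (y - t)/2).
  assert (E : (cos y + - cos t) * ((cos y + - cos t) * 1) + (sin y + - sin t) * ((sin y + - sin t) * 1)
              = Rsqr (2 * sin h)).
  { assert (Hc : cos (y - t) = 1 - 2 * sin h * sin h).
    { replace (y - t) with (2 * h) by (unfold h; field). apply cos_2a_sin. }
    rewrite cos_minus in Hc. pose proof (sin2_cos2 y). pose proof (sin2_cos2 t).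
    unfold Rsqr in *. nra. }
  rewrite E, sqrt_Rsqr_abs, Rabs_mult, Rabs_right by lra.
  pose proof (Rabs_sin_le h). unfold h in *.
  replace (y - t) with (2 * ((y - t)/2)) at 2 by field.
  rewrite Rabs_mult, (Rabs_right 2) by lra. lra.
Qed.

Lemma cos_diff_le (y t : R) : Rabs (cos y - cos t) <= Rabs (y - t).
Proof.
  eapply Rle_trans; [|apply (Cmod_cis_diff y t)].
  eapply Rle_trans; [|apply Re_le_Cmod]. simpl. right. reflexivity.
Qed.

Lemma sin_diff_le (y t : R) : Rabs (sin y - sin t) <= Rabs (y - t).
Proof.
  eapply Rle_trans; [|apply (Cmod_cis_diff y t)].
  eapply Rle_trans; [|apply Im_le_Cmod]. simpl. right. reflexivity.
Qed.

Lemma de_moivre (t : R) (k : nat) :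
  Cpow (cos t, sin t) k = (cos (INR k * t), sin (INR k * t)).
Proof.
  induction k.
  - simpl. rewrite Rmult_0_l, cos_0, sin_0. reflexivity.
  - rewrite Cpow_S, IHk, S_INR. unfold Cmult; simpl.
    replace ((INR k + 1) * t) with (t + INR k * t) by ring.
    rewrite cos_plus, sin_plus. f_equal; ring.
Qed.

Lemma ex_series_bound (x y : nat -> R) :
  (forall n, Rabs (x n) <= y n) -> ex_series y -> ex_series x.
Proof. intros H Hy. apply (ex_series_le x y); auto. Qed.

Lemma ex_series_abs_bound (x y : nat -> R) :
  (forall n, Rabs (x n) <= y n) -> ex_series y -> ex_series (fun n => Rabs (x n)).
Proof. intros H Hy. apply (ex_series_bound _ y); auto. intros n.
  rewrite Rabs_Rabsolu. auto. Qed.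

Lemma Series_zero : Series (fun _ => 0) = 0.
Proof.
  rewrite <- (Series_ext (fun n => 0 * 1)) by (intros; ring).
  rewrite Series_scal_l. ring.
Qed.

Lemma Series_nonneg (x : nat -> R) : (forall n, 0 <= x n) -> ex_series x -> 0 <= Series x.
Proof.
  intros H Hx. rewrite <- Series_zero. apply Series_le; auto. intros n; split; [lra| auto].
Qed.

Lemma Series_abs_le (x y : nat -> R) :
  (forall n, Rabs (x n) <= y n) -> ex_series y -> Rabs (Series x) <= Series y.
Proof.
  intros H Hy. eapply Rle_trans. apply Series_Rabs. eapply ex_series_abs_bound; eauto.
  apply Series_le; auto. intros n; split; auto. apply Rabs_pos.
Qed.

Lemma Series_le_gen (x y : nat -> R) :
  (forall n, x n <= y n) -> ex_series x -> ex_series y -> Series x <= Series y.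
Proof.
  intros H Hx Hy. assert (0 <= Series (fun n => y n - x n)).
  { apply Series_nonneg. intros n; specialize (H n); lra.
    apply (ex_series_minus y x); auto. }
  rewrite Series_minus in H0 by auto. lra.
Qed.

Definition aa : R := 9/10.

Lemma aa_pos : 0 < aa. Proof. unfold aa; lra. Qed.
Lemma aa_lt1 : aa < 1. Proof. unfold aa; lra. Qed.

Lemma ex_series_aa : ex_series (fun n => aa ^ n).
Proof. apply ex_series_geom. unfold aa. rewrite Rabs_right; lra. Qed.

Lemma Series_aa : Series (fun n => aa ^ n) = 10.
Proof. rewrite Series_geom. unfold aa. field. unfold aa. rewrite Rabs_right; lra. Qed.

Lemma ex_series_aa_scal (c : R) : ex_series (fun n => c * aa ^ n).
Proof. apply (ex_series_scal_l c (fun n => aa ^ n)). apply ex_series_aa. Qed.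

Definition wterm (t : R) (n : nat) : R := aa ^ n * cos (9 ^ n * t).
Definition uu (t : R) : R := Series (wterm t).
Definition vterm (t : R) (n : nat) : R := aa ^ n * sin (9 ^ n * t).
Definition vv (t : R) : R := Series (vterm t).

Lemma ex_wterm (t : R) : ex_series (wterm t).
Proof.
  apply (ex_series_bound _ (fun n => aa ^ n)); [|apply ex_series_aa].
  intros n. unfold wterm. rewrite Rabs_mult, Rabs_right.
  pose proof (COS_bound (9^n*t)). pose proof (pow_lt aa n aa_pos).
  assert (Rabs (cos (9 ^ n * t)) <= 1) by (apply Rabs_le; lra). nra.
  left; apply pow_lt, aa_pos.
Qed.

Lemma nine_pow_odd (k : nat) : exists s : nat, 9 ^ k = 1 + 8 * INR s.
Proof.
  induction k.
  - exists 0%nat. simpl. lra.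
  - destruct IHk as [s Hs]. exists (1 + 9 * s)%nat.
    replace (9 ^ S k) with (9 * 9^k) by (simpl; ring). rewrite Hs.
    rewrite plus_INR, mult_INR. replace (INR 9) with 9 by (simpl; ring).
    replace (INR 1) with 1 by (simpl; ring). ring.
Qed.

Lemma cos_per_Z (x : R) (q : Z) : cos (x + 2 * IZR q * PI) = cos x.
Proof.
  destruct (Z_le_gt_dec 0 q).
  - rewrite <- (Z2Nat.id q) by lia. rewrite <- INR_IZR_INZ. apply cos_period.
  - replace q with (- Z.of_nat (Z.to_nat (- q)))%Z by lia.
    rewrite opp_IZR, <- INR_IZR_INZ.
    set (k := Z.to_nat (-q)).
    rewrite <- (cos_period (x + 2 * - INR k * PI) k). f_equal. ring.
Qed.

Lemma sin_ZPI (N : Z) : sin (IZR N * PI) = 0.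
Proof. apply sin_eq_0_1. exists N. reflexivity. Qed.

Lemma cos_ZPI_plus (N : Z) (x : R) : cos (IZR N * PI + x) = cos (IZR N * PI) * cos x.
Proof. rewrite cos_plus, sin_ZPI. ring. Qed.

Lemma cos_ZPI_sq (N : Z) : cos (IZR N * PI) * cos (IZR N * PI) = 1.
Proof. pose proof (sin2_cos2 (IZR N * PI)). rewrite sin_ZPI in H. unfold Rsqr in H. lra. Qed.

Lemma cos_nine_pow (k : nat) (N : Z) (x : R) :
  cos (9 ^ k * (IZR N * PI) + x) = cos (IZR N * PI + x).
Proof.
  destruct (nine_pow_odd k) as [s Hs]. rewrite Hs.
  rewrite <- (cos_per_Z (IZR N * PI + x) (4 * Z.of_nat s * N)).
  f_equal. rewrite !mult_IZR, <- INR_IZR_INZ. ring.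
Qed.

Lemma pow_bernoulli (x : R) (m : nat) : 0 <= x -> 1 + INR m * x <= (1 + x) ^ m.
Proof.
  intros Hx. induction m.
  - simpl. lra.
  - rewrite S_INR. simpl. assert (0 <= INR m) by apply pos_INR. nra.
Qed.

Lemma weier_u (theta M delta : R) : 0 < delta ->
  exists y, theta < y < theta + delta /\ M * (y - theta) < Rabs (uu y - uu theta).
Proof.
  intros Hdel.
  destruct (INR_unbounded (Rmax (50 * M) (6 / delta))) as [m0 Hm0].
  set (m := S m0).
  assert (Hm : INR m > Rmax (50 * M) (6 / delta)).
  { unfold m. rewrite S_INR. lra. }
  set (q := 81/10).
  assert (Hqm : INR m < q ^ m).
  { pose proof (pow_bernoulli (71/10) m ltac:(lra)). unfold q.
    replace (81/10) with (1 + 71/10) by lra. pose proof (pos_INR m). lra. }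
  set (B := 9 ^ m).
  assert (HqB : q ^ m <= B). { apply pow_incr. unfold q; lra. }
  assert (HB : 6 / delta < B). { pose proof (Rmax_r (50*M) (6/delta)). lra. }
  assert (HM : 50 * M < q ^ m). { pose proof (Rmax_l (50*M) (6/delta)). lra. }
  assert (Bpos : 0 < B). { apply pow_lt; lra. }
  assert (HaB : aa ^ m * B = q ^ m).
  { unfold B, q. rewrite <- Rpow_mult_distr. f_equal. unfold aa. lra. }
  pose proof PI_RGT_0 as Hpi. pose proof PI_4 as Hpi4.
  set (s := B * theta / PI).
  set (alpha := (up (s + 1/2) - 1)%Z).
  destruct (archimed (s + 1/2)) as [Ha1 Ha2].
  assert (Halpha : IZR alpha = IZR (up (s + 1/2)) - 1) by (unfold alpha; rewrite minus_IZR; reflexivity).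
  set (xi := s - IZR alpha).
  assert (Hxi1 : - (1/2) <= xi) by (unfold xi; lra).
  assert (Hxi2 : xi < 1/2) by (unfold xi; lra).
  set (y := PI * (IZR alpha + 1) / B).
  assert (Hth : theta = PI * s / B) by (unfold s; field; lra).
  assert (Hyd : y - theta = PI * (1 - xi) / B) by (rewrite Hth; unfold y, xi; field; lra).
  assert (Hpos : 0 < y - theta).
  { rewrite Hyd. apply Rdiv_lt_0_compat; [|lra]. apply Rmult_lt_0_compat; lra. }
  assert (Hsmall : y - theta <= 6 / B).
  { rewrite Hyd. apply Rmult_le_compat_r. left; apply Rinv_0_lt_compat; lra. nra. }
  assert (Hsmall2 : 6 / B < delta).
  { apply (Rmult_lt_reg_r B); [lra|]. unfold Rdiv. rewrite Rmult_assoc, Rinv_l by lra.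
    apply (Rmult_lt_reg_r (/ delta)). apply Rinv_0_lt_compat; lra.
    replace (delta * B * / delta) with B by (field; lra). lra. }
  exists y. split. split; lra.
  set (d := fun n => wterm y n - wterm theta n).
  assert (Exd : ex_series d).
  { apply (ex_series_minus (wterm y) (wterm theta)); apply ex_wterm. }
  assert (Hdiff : uu y - uu theta = Series d).
  { unfold uu, d. rewrite Series_minus; auto; apply ex_wterm. }
  set (eps := cos (IZR alpha * PI)).
  set (T := Series (fun k => aa ^ k * (1 + cos (9 ^ k * (PI * xi))))).
  assert (ExT : ex_series (fun k => aa ^ k * (1 + cos (9 ^ k * (PI * xi))))).
  { apply (ex_series_bound _ (fun k => 2 * aa ^ k)). 2: apply ex_series_aa_scal.
    intros k. pose proof (COS_bound (9 ^ k * (PI * xi))). pose proof (pow_lt aa k aa_pos).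
    rewrite Rabs_right by nra. nra. }
  assert (Htail : Series (fun k => d (m + k)%nat) = - eps * (aa ^ m * T)).
  { unfold T. rewrite <- Series_scal_l, <- Series_scal_l. apply Series_ext. intros k.
    unfold d, wterm. rewrite !pow_add. fold B.
    assert (E1 : cos (B * 9 ^ k * y) = - eps).
    { replace (B * 9 ^ k * y) with (9 ^ k * (IZR (alpha + 1) * PI) + 0)
        by (unfold y; rewrite plus_IZR; field; lra).
      rewrite cos_nine_pow, Rplus_0_r, plus_IZR.
      replace ((IZR alpha + 1) * PI) with (IZR alpha * PI + PI) by ring.
      rewrite neg_cos. reflexivity. }
    assert (E2 : cos (B * 9 ^ k * theta) = eps * cos (9 ^ k * (PI * xi))).
    { replace (B * 9 ^ k * theta) with (9 ^ k * (IZR alpha * PI) + 9 ^ k * (PI * xi))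
        by (rewrite Hth; unfold xi; field; lra).
      rewrite cos_nine_pow, cos_ZPI_plus. reflexivity. }
    rewrite E1, E2. ring. }
  assert (HT : 1 <= T).
  { unfold T. rewrite Series_incr_1 by exact ExT.
    assert (0 <= Series (fun k => aa ^ S k * (1 + cos (9 ^ S k * (PI * xi))))).
    { apply Series_nonneg.
      - intros k. pose proof (COS_bound (9 ^ S k * (PI * xi))). pose proof (pow_lt aa (S k) aa_pos). nra.
      - apply (ex_series_incr_1 (fun k => aa ^ k * (1 + cos (9 ^ k * (PI * xi))))). exact ExT. }
    cbv beta. rewrite pow_O, Rmult_1_l, Rmult_1_l.
    assert (0 <= cos (PI * xi)) by (apply cos_ge_0; nra). lra. }
  assert (Heps : Rabs eps = 1).
  { pose proof (cos_ZPI_sq alpha). fold eps in H.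
    assert (Rabs eps * Rabs eps = 1) by (rewrite <- Rabs_mult, H; apply Rabs_R1).
    pose proof (Rabs_pos eps). nra. }
  assert (Hsplit : Series d = sum_f_R0 d (pred m) + Series (fun k => d (m + k)%nat)).
  { apply Series_incr_n. unfold m; lia. exact Exd. }
  assert (Hhead : Rabs (sum_f_R0 d (pred m)) <= (y - theta) * (q ^ m * (10/71))).
  { eapply Rle_trans. apply Rsum_abs.
    eapply Rle_trans. apply (sum_Rle _ (fun n => q ^ n * (y - theta))).
    { intros n _. unfold d, wterm. replace q with (aa * 9) by (unfold q, aa; lra).
      rewrite Rpow_mult_distr.
      replace (aa ^ n * cos (9 ^ n * y) - aa ^ n * cos (9 ^ n * theta))
        with (aa ^ n * (cos (9 ^ n * y) - cos (9 ^ n * theta))) by ring.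
      rewrite Rabs_mult, (Rabs_right (aa ^ n)) by (left; apply pow_lt, aa_pos).
      rewrite Rmult_assoc. apply Rmult_le_compat_l. left; apply pow_lt, aa_pos.
      eapply Rle_trans. apply cos_diff_le.
      replace (9 ^ n * y - 9 ^ n * theta) with (9 ^ n * (y - theta)) by ring.
      rewrite Rabs_mult, !Rabs_right. lra. lra. left; apply pow_lt; lra. }
    rewrite <- (scal_sum (fun n => q ^ n) (pred m) (y - theta)).
    pose proof (GP_finite q (pred m)).
    replace (pred m + 1)%nat with m in H by (unfold m; simpl; lia).
    assert (sum_f_R0 (fun n => q ^ n) (pred m) = (q ^ m - 1) * (10/71)).
    { unfold q in *. apply (Rmult_eq_reg_r (81/10 - 1)). rewrite H. field. lra. }
    rewrite H0. nra. }
  rewrite Hdiff, Hsplit, Htail.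
  assert (Htl : Rabs (- eps * (aa ^ m * T)) = aa ^ m * T).
  { rewrite Rabs_mult, Rabs_Ropp, Heps, Rmult_1_l. apply Rabs_right.
    pose proof (pow_lt aa m aa_pos). nra. }
  pose proof (Rabs_triang_inv (- eps * (aa ^ m * T)) (- sum_f_R0 d (pred m))) as Htri.
  rewrite Rabs_Ropp in Htri.
  replace (- eps * (aa ^ m * T) - - sum_f_R0 d (pred m))
    with (sum_f_R0 d (pred m) + - eps * (aa ^ m * T)) in Htri by ring.
  rewrite Htl in Htri.
  assert (Ham : (y - theta) * (q ^ m / 6) <= aa ^ m).
  { rewrite <- HaB. pose proof (pow_lt aa m aa_pos).
    assert ((y - theta) * B <= 6).
    { apply (Rmult_le_reg_r (/ B)). apply Rinv_0_lt_compat; lra.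
      replace ((y - theta) * B * / B) with (y - theta) by (field; lra). exact Hsmall. }
    nra. }
  assert (aa ^ m <= aa ^ m * T) by (pose proof (pow_lt aa m aa_pos); nra).
  assert (M * (y - theta) < (y - theta) * (q ^ m / 50)) by nra.
  set (P := q ^ m) in *. set (hd := sum_f_R0 d (pred m)) in *.
  set (Y := y - theta) in *.
  assert (0 <= Y * P) by (pose proof (pos_INR m); apply Rmult_le_pos; lra).
  assert (Y * (P * (10/71)) = (Y*P) * (10/71)) by ring.
  assert (Y * (P / 6) = (Y*P) / 6) by (unfold Rdiv; ring).
  assert (Y * (P / 50) = (Y*P) / 50) by (unfold Rdiv; ring).
  lra.
Qed.

Lemma vv_shift (t : R) : vv t = uu (t - PI/2).
Proof.
  unfold vv, uu. apply Series_ext. intros n. unfold vterm, wterm. f_equal.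
  destruct (nine_pow_odd n) as [s Hs].
  replace (9 ^ n * (t - PI/2)) with ((9 ^ n * t - PI/2) + 2 * IZR (- (2 * Z.of_nat s)) * PI).
  rewrite cos_per_Z. rewrite <- cos_neg. replace (- (9 ^ n * t - PI/2)) with (PI/2 - 9^n * t) by ring.
  rewrite cos_shift. reflexivity.
  rewrite opp_IZR, mult_IZR, <- INR_IZR_INZ. rewrite Hs. field.
Qed.

Lemma weier_v (theta M delta : R) : 0 < delta ->
  exists y, theta < y < theta + delta /\ M * (y - theta) < Rabs (vv y - vv theta).
Proof.
  intros Hd. destruct (weier_u (theta - PI/2) M delta Hd) as [y [Hy1 Hy2]].
  exists (y + PI/2). split. lra. rewrite !vv_shift.
  replace (y + PI/2 - PI/2) with y by ring. replace (y + PI/2 - theta) with (y - (theta - PI/2)) by ring.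
  exact Hy2.
Qed.

Lemma exp_cube (x : R) : 0 <= x -> x ^ 3 / 6 <= exp x.
Proof.
  intros Hx. pose proof (exp_ge_taylor x 3 Hx).
  assert (E : sum_f_R0 (fun k : nat => x ^ k / INR (Factorial.fact k)) 3 = 1 + x + x^2/2 + x^3/6).
  { simpl. field. }
  rewrite E in H. assert (0 <= x^2) by (apply pow_le; lra). lra.
Qed.

Lemma pow_kk_bound (rho : R) : 0 < rho < 1 ->
  exists K, 0 < K /\ forall k : nat, INR k * INR k * rho ^ k <= K.
Proof.
  intros Hr. set (L := - ln rho).
  assert (HL : 0 < L).
  { unfold L. assert (ln rho < 0). { rewrite <- ln_1. apply ln_increasing; lra. } lra. }
  assert (Hexp : forall k, rho ^ k * exp (INR k * L) = 1).
  { induction k. simpl. rewrite Rmult_0_l, exp_0. ring.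
    rewrite S_INR, Rmult_plus_distr_r, Rmult_1_l, exp_plus. simpl.
    assert (rho * exp L = 1). { unfold L. rewrite exp_Ropp, exp_ln by lra. field. lra. }
    transitivity ((rho ^ k * exp (INR k * L)) * (rho * exp L)). ring. rewrite IHk, H. ring. }
  exists (6 / (L^3)). split. apply Rdiv_lt_0_compat. lra. apply pow_lt; lra.
  intros k. destruct k.
  - change (INR 0) with 0. rewrite Rmult_0_l, Rmult_0_l. left. apply Rdiv_lt_0_compat. lra. apply pow_lt; lra.
  - set (n := S k). assert (Hn : 1 <= INR n) by (unfold n; rewrite S_INR; pose proof (pos_INR k); lra).
    pose proof (exp_cube (INR n * L) ltac:(nra)).
    specialize (Hexp n). set (E := exp (INR n * L)) in *.
    assert (HE : 0 < E) by apply exp_pos.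
    assert (Hrk : rho ^ n = / E) by (apply (Rmult_eq_reg_r E); [rewrite Hexp; field|]; lra).
    rewrite Hrk.
    assert (HL3 : 0 < L^3) by (apply pow_lt; lra).
    apply (Rmult_le_reg_r E); [exact HE|]. replace (INR n * INR n * / E * E) with (INR n * INR n) by (field; lra).
    apply (Rmult_le_reg_l (L^3)); [exact HL3|].
    replace (L ^ 3 * (6 / L ^ 3 * E)) with (6 * E) by (field; lra).
    replace (INR n * L) with (L * INR n) in H by ring.
    assert ((L * INR n)^3 = L^3 * (INR n * INR n) * INR n) by ring.
    assert (0 <= L^3 * (INR n * INR n)) by (apply Rmult_le_pos; nra).
    nra.
Qed.

Definition CS (x : nat -> C) : C :=
  (Series (fun n => fst (x n)), Series (fun n => snd (x n))).
Definition csum (x : nat -> C) : Prop := ex_series (fun n => Cmod (x n)).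

Lemma csum_bound (x : nat -> C) (y : nat -> R) :
  (forall n, Cmod (x n) <= y n) -> ex_series y -> csum x.
Proof.
  intros H Hy. unfold csum. apply (ex_series_bound _ y); auto.
  intros n. rewrite Rabs_right. auto. apply Rle_ge, Cmod_ge_0.
Qed.

Lemma csum_re (x : nat -> C) : csum x -> ex_series (fun n => fst (x n)).
Proof. intros H. apply (ex_series_bound _ _ (fun n => Re_le_Cmod (x n)) H). Qed.
Lemma csum_im (x : nat -> C) : csum x -> ex_series (fun n => snd (x n)).
Proof. intros H. apply (ex_series_bound _ _ (fun n => Im_le_Cmod (x n)) H). Qed.

Lemma csum_minus (x y : nat -> C) : csum x -> csum y -> csum (fun n => Cminus (x n) (y n)).
Proof.
  intros Hx Hy. apply (csum_bound _ (fun n => Cmod (x n) + Cmod (y n))).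
  - intros n. unfold Cminus. eapply Rle_trans. apply Cmod_triangle. rewrite Cmod_opp. lra.
  - apply (ex_series_plus (fun n => Cmod (x n)) (fun n => Cmod (y n))); auto.
Qed.

Lemma CS_minus (x y : nat -> C) : csum x -> csum y ->
  CS (fun n => Cminus (x n) (y n)) = Cminus (CS x) (CS y).
Proof.
  intros Hx Hy. unfold CS, Cminus, Cplus, Copp; simpl. f_equal.
  - rewrite <- Rminus_def. rewrite <- Series_minus by (apply csum_re; auto). apply Series_ext; intros n. simpl. ring.
  - rewrite <- Rminus_def. rewrite <- Series_minus by (apply csum_im; auto). apply Series_ext; intros n. simpl. ring.
Qed.

Lemma CS_mult_r (x : nat -> C) (h : C) : csum x ->
  CS (fun n => Cmult (x n) h) = Cmult (CS x) h.
Proof.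
  intros Hx. destruct h as [h1 h2]. unfold CS, Cmult; simpl. f_equal.
  - rewrite <- Series_scal_r, <- Series_scal_r, <- Series_minus.
    apply Series_ext; intros n; simpl; ring.
    apply (ex_series_scal_r h1 (fun n => fst (x n))). apply csum_re; auto.
    apply (ex_series_scal_r h2 (fun n => snd (x n))). apply csum_im; auto.
  - rewrite <- Series_scal_r, <- Series_scal_r, <- Series_plus.
    apply Series_ext; intros n; simpl; ring.
    apply (ex_series_scal_r h2 (fun n => fst (x n))). apply csum_re; auto.
    apply (ex_series_scal_r h1 (fun n => snd (x n))). apply csum_im; auto.
Qed.

Lemma Cmod_CS_le (x : nat -> C) (y : nat -> R) :
  (forall n, Cmod (x n) <= y n) -> ex_series y -> Cmod (CS x) <= 2 * Series y.
Proof.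
  intros H Hy. unfold CS. eapply Rle_trans. apply Cmod_le_sum.
  assert (Rabs (Series (fun n => fst (x n))) <= Series y).
  { apply Series_abs_le; auto. intros n. eapply Rle_trans. apply Re_le_Cmod. auto. }
  assert (Rabs (Series (fun n => snd (x n))) <= Series y).
  { apply Series_abs_le; auto. intros n. eapply Rle_trans. apply Im_le_Cmod. auto. }
  lra.
Qed.

Lemma Cmod_RtoC_mult (r : R) (c : C) : Cmod (Cmult (RtoC r) c) = Rabs r * Cmod c.
Proof. rewrite Cmod_mult, Cmod_R. reflexivity. Qed.

Lemma Cmod_pow_le (z : C) (rho : R) (k : nat) : Cmod z <= rho -> Cmod (Cpow z k) <= rho ^ k.
Proof.
  intros H. rewrite Cmod_pow. apply pow_incr. split; auto. apply Cmod_ge_0.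
Qed.

Lemma pow_diff_le (w z : C) (k : nat) : Cmod w <= 1 -> Cmod z <= 1 ->
  Cmod (Cminus (Cpow w k) (Cpow z k)) <= INR k * Cmod (Cminus w z).
Proof.
  intros Hw Hz. induction k.
  - simpl. replace (Cminus 1 1) with (RtoC 0) by (unfold Cminus, Cplus, Copp, RtoC; simpl; f_equal; ring).
    rewrite Cmod_0. lra.
  - rewrite !Cpow_S.
    replace (Cminus (Cmult w (Cpow w k)) (Cmult z (Cpow z k)))
      with (Cplus (Cmult w (Cminus (Cpow w k) (Cpow z k))) (Cmult (Cpow z k) (Cminus w z))) by ring.
    eapply Rle_trans. apply Cmod_triangle. rewrite !Cmod_mult.
    pose proof (Cmod_pow_le z 1 k Hz). rewrite pow1 in H.
    pose proof (Cmod_ge_0 w). pose proof (Cmod_ge_0 (Cminus (Cpow w k) (Cpow z k))).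
    pose proof (Cmod_ge_0 (Cminus w z)). pose proof (Cmod_ge_0 (Cpow z k)).
    rewrite S_INR. nra.
Qed.

Definition Eterm (w z : C) (k : nat) : C :=
  Cminus (Cminus (Cpow w k) (Cpow z k)) (Cmult (Cmult (RtoC (INR k)) (Cpow z (pred k))) (Cminus w z)).

Lemma Eterm_bound (w z : C) (rho : R) (k : nat) : 0 < rho -> Cmod w <= rho -> Cmod z <= rho ->
  rho ^ 2 * Cmod (Eterm w z k) <= INR k * INR k * rho ^ k * Cmod (Cminus w z) ^ 2.
Proof.
  intros Hr Hw Hz. induction k.
  - unfold Eterm. simpl.
    replace (Cminus (Cminus 1 1) (Cmult (Cmult (RtoC 0) 1) (Cminus w z))) with (RtoC 0)
      by (unfold Cminus, Cplus, Copp, Cmult, RtoC; simpl; f_equal; ring).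
    rewrite Cmod_0. lra.
  - assert (E : Eterm w z (S k) = Cplus (Cmult w (Eterm w z k))
               (Cmult (Cmult (RtoC (INR k)) (Cpow z (pred k))) (Cmult (Cminus w z) (Cminus w z)))).
    { unfold Eterm. rewrite S_INR, RtoC_plus. destruct k.
      - simpl. ring.
      - simpl pred. rewrite !Cpow_S. ring. }
    rewrite E. 
    set (d := Cmod (Cminus w z)).
    assert (Hd : 0 <= d) by apply Cmod_ge_0.
    assert (Hterm : rho ^ 2 * Cmod (Cmult (Cmult (RtoC (INR k)) (Cpow z (pred k))) (Cmult (Cminus w z) (Cminus w z)))
                    <= INR k * rho ^ (S k) * d ^ 2).
    { rewrite !Cmod_mult, Cmod_R, Rabs_right by (apply Rle_ge, pos_INR). fold d.
      destruct k.
      - simpl. lra.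
      - simpl pred. pose proof (Cmod_pow_le z rho k Hz).
        pose proof (pos_INR (S k)). pose proof (Cmod_ge_0 (Cpow z k)).
        replace (rho ^ S (S k)) with (rho ^ 2 * rho ^ k) by (simpl; ring).
        assert (0 <= rho^2) by (apply pow_le; lra).
        assert (0 <= d * d) by nra.
        replace (d ^ 2) with (d * d) by ring.
        apply Rmult_le_compat_l with (r := INR (S k) * (d*d)) in H. 2: nra.
        nra. }
    eapply Rle_trans. apply Rmult_le_compat_l. apply pow_le; lra. apply Cmod_triangle.
    rewrite Rmult_plus_distr_l. rewrite Cmod_mult.
    pose proof (Cmod_ge_0 (Eterm w z k)). pose proof (Cmod_ge_0 w).
    assert (rho ^ 2 * (Cmod w * Cmod (Eterm w z k)) <= rho * (INR k * INR k * rho ^ k * d ^ 2)).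
    { assert (0 <= rho ^ 2 * Cmod (Eterm w z k)) by (apply Rmult_le_pos; [apply pow_le; lra|lra]).
      fold d in IHk.
      replace (rho^2 * (Cmod w * Cmod (Eterm w z k))) with (Cmod w * (rho^2 * Cmod (Eterm w z k))) by ring.
      apply Rle_trans with (rho * (rho^2 * Cmod (Eterm w z k))).
      apply Rmult_le_compat_r; lra. apply Rmult_le_compat_l; lra. }
    rewrite S_INR. replace (rho ^ S k) with (rho * rho ^ k) in * by (simpl; ring).
    assert (0 <= rho ^ k) by (apply pow_le; lra). pose proof (pos_INR k).
    assert (0 <= d^2) by (apply pow_le; lra).
    assert (0 <= INR k * (rho * rho ^ k) * d ^ 2) by (repeat apply Rmult_le_pos; lra).
    assert (HP : 0 <= rho * rho ^ k * d ^ 2) by (repeat apply Rmult_le_pos; lra).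
    assert (Hf : rho * (INR k * INR k * rho ^ k * d ^ 2) + INR k * (rho * rho ^ k) * d ^ 2
                 <= (INR k + 1) * (INR k + 1) * (rho * rho ^ k) * d ^ 2).
    { replace (rho * (INR k * INR k * rho ^ k * d ^ 2)) with (INR k * INR k * (rho * rho ^ k * d ^ 2)) by ring.
      replace (INR k * (rho * rho ^ k) * d ^ 2) with (INR k * (rho * rho ^ k * d ^ 2)) by ring.
      replace ((INR k + 1) * (INR k + 1) * (rho * rho ^ k) * d ^ 2) with ((INR k + 1) * (INR k + 1) * (rho * rho ^ k * d ^ 2)) by ring.
      nra. }
    lra.
Qed.

Lemma locally_CA (z : C) (P : C -> Prop) :
  (exists d, 0 < d /\ forall w, Cmod (Cminus w z) < d -> P w) ->
  @locally (AbsRing_UniformSpace C_AbsRing) z P.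
Proof.
  intros [d [Hd H]]. exists (mkposreal d Hd). intros y Hy. apply H. exact Hy.
Qed.

Lemma locally_CA_inv (z : C) (P : C -> Prop) :
  @locally (AbsRing_UniformSpace C_AbsRing) z P ->
  exists d, 0 < d /\ forall w, Cmod (Cminus w z) < d -> P w.
Proof.
  intros [e He]. exists e. split. apply cond_pos. intros w Hw. apply He. exact Hw.
Qed.

Lemma derive_from_quad (F : C -> C) (z l : C) :
  (exists delta K, 0 < delta /\ 0 <= K /\ forall w, Cmod (Cminus w z) < delta ->
     Cmod (Cminus (Cminus (F w) (F z)) (Cmult (Cminus w z) l)) <= K * Cmod (Cminus w z) ^ 2) ->
  @is_derive C_AbsRing C_NormedModule F z l.
Proof.
  intros [delta [K [Hd [HK H]]]]. split.
  - apply is_linear_scal_l.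
  - intros x Hx. pose proof (@is_filter_lim_locally_unique C_AbsRing (AbsRing_NormedModule C_AbsRing) z x Hx) as Hzx. subst x.
    intros eps. apply locally_CA.
    exists (Rmin delta (eps / (K + 1))). split.
    { apply Rmin_glb_lt. lra. apply Rdiv_lt_0_compat. apply cond_pos. lra. }
    intros w Hw. change (Cmod (Cminus (Cminus (F w) (F z)) (Cmult (Cminus w z) l)) <= eps * Cmod (Cminus w z)).
    assert (H1 : Cmod (Cminus w z) < delta) by (eapply Rlt_le_trans; [exact Hw| apply Rmin_l]).
    assert (H2 : Cmod (Cminus w z) < eps / (K + 1)) by (eapply Rlt_le_trans; [exact Hw| apply Rmin_r]).
    eapply Rle_trans. apply H. exact H1.
    set (d := Cmod (Cminus w z)) in *. assert (0 <= d) by apply Cmod_ge_0.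
    pose proof (cond_pos eps).
    assert (K * d <= eps).
    { apply Rle_trans with ((K + 1) * d). nra.
      apply (Rmult_lt_compat_l (K+1)) in H2; [|lra].
      replace ((K + 1) * (eps / (K + 1))) with (pos eps) in H2 by (field; lra). lra. }
    replace (K * d ^ 2) with ((K * d) * d) by ring. apply Rmult_le_compat_r; lra.
Qed.

Lemma deriv_lip (F : C -> C) (p l : C) : @is_derive C_AbsRing C_NormedModule F p l ->
  exists delta, 0 < delta /\ forall w, Cmod (Cminus w p) < delta ->
    Cmod (Cminus (F w) (F p)) <= (Cmod l + 1) * Cmod (Cminus w p).
Proof.
  intros [_ H]. specialize (H p (fun P HP => HP)).
  specialize (H (mkposreal 1 Rlt_0_1)).
  apply locally_CA_inv in H. destruct H as [d [Hd H]]. exists d. split; auto.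
  intros w Hw. specialize (H w Hw).
  change (Cmod (Cminus (Cminus (F w) (F p)) (Cmult (Cminus w p) l)) <= 1 * Cmod (Cminus w p)) in H.
  replace (Cminus (F w) (F p)) with (Cplus (Cminus (Cminus (F w) (F p)) (Cmult (Cminus w p) l)) (Cmult (Cminus w p) l)) by ring.
  eapply Rle_trans. apply Cmod_triangle. rewrite Cmod_mult. 
  pose proof (Cmod_ge_0 (Cminus w p)). nra.
Qed.

Definition kk (n : nat) : nat := Nat.pow 9 n.
Lemma INR_kk (n : nat) : INR (kk n) = 9 ^ n.
Proof. unfold kk. rewrite pow_INR. f_equal. simpl. ring. Qed.
Lemma kk_S (n : nat) : exists j, kk n = S j.
Proof. unfold kk. pose proof (Nat.pow_nonzero 9 n ltac:(lia)). destruct (Nat.pow 9 n). lia. eauto. Qed.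

Definition Wt (z : C) (n : nat) : C := Cmult (RtoC (aa ^ n)) (Cpow z (kk n)).
Definition WW (z : C) : C := CS (Wt z).
Definition DWt (z : C) (n : nat) : C := Cmult (RtoC (aa ^ n * INR (kk n))) (Cpow z (pred (kk n))).
Definition DW (z : C) : C := CS (DWt z).

Lemma aa_pow_pos (n : nat) : 0 < aa ^ n.
Proof. apply pow_lt, aa_pos. Qed.

Lemma Cmod_Wt (z : C) (n : nat) : Cmod z <= 1 -> Cmod (Wt z n) <= aa ^ n.
Proof.
  intros H. unfold Wt. rewrite Cmod_RtoC_mult, Rabs_right by (left; apply aa_pow_pos).
  pose proof (Cmod_pow_le z 1 (kk n) H). rewrite pow1 in H0. pose proof (aa_pow_pos n).
  pose proof (Cmod_ge_0 (Cpow z (kk n))). nra.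
Qed.

Lemma csum_Wt (z : C) : Cmod z <= 1 -> csum (Wt z).
Proof. intros H. apply (csum_bound _ (fun n => aa ^ n)). intros; apply Cmod_Wt; auto. apply ex_series_aa. Qed.

Lemma WW_circle (y : R) : WW (cos y, sin y) = (uu y, vv y).
Proof.
  unfold WW, CS, uu, vv. f_equal; apply Series_ext; intros n; unfold Wt, wterm, vterm;
  rewrite de_moivre, INR_kk; simpl; ring.
Qed.

Lemma WW_zero : WW (RtoC 0) = RtoC 0.
Proof.
  unfold WW, CS. assert (E : forall n, Wt (RtoC 0) n = RtoC 0).
  { intros n. unfold Wt. destruct (kk_S n) as [j Hj]. rewrite Hj, Cpow_S.
    unfold RtoC, Cmult; simpl; f_equal; ring. }
  rewrite (Series_ext (fun n => fst (Wt (RtoC 0) n)) (fun _ => 0)) by (intros n; rewrite E; reflexivity).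
  rewrite (Series_ext (fun n => snd (Wt (RtoC 0) n)) (fun _ => 0)) by (intros n; rewrite E; reflexivity).
  rewrite Series_zero. reflexivity.
Qed.

Lemma WW_bound (z : C) : Cmod z <= 1 -> Cmod (WW z) <= 20.
Proof.
  intros H. unfold WW. eapply Rle_trans. apply (Cmod_CS_le _ (fun n => aa ^ n)).
  intros; apply Cmod_Wt; auto. apply ex_series_aa. rewrite Series_aa. lra.
Qed.

Lemma WW_cont : continuous_on_closed_disk WW.
Proof.
  intros z Hz eps Heps. unfold closed_disk in *.
  destruct (pow_lt_1_zero aa ltac:(rewrite Rabs_right; [apply aa_lt1| left; apply aa_pos]) (eps / 80) ltac:(lra)) as [N0 HN0].
  set (N := S N0). assert (HaN : aa ^ N < eps / 80).
  { specialize (HN0 N ltac:(unfold N; lia)). rewrite Rabs_right in HN0 by (left; apply aa_pow_pos). exact HN0. }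
  set (CN := sum_f_R0 (fun n => 9 ^ n) (pred N)).
  assert (HCN : 0 <= CN).
  { unfold CN. apply cond_pos_sum. intros; apply pow_le; lra. }
  exists (eps / (4 * (CN + 1))). split. apply Rdiv_lt_0_compat; lra.
  intros w Hw Hd.
  set (d := Cmod (Cminus w z)) in *.
  assert (Hd0 : 0 <= d) by apply Cmod_ge_0.
  unfold WW. rewrite <- CS_minus by (apply csum_Wt; auto).
  set (y := fun n => Cmod (Cminus (Wt w n) (Wt z n))).
  assert (Hy2 : forall n, y n <= 2 * aa ^ n).
  { intros n. unfold y, Cminus. eapply Rle_trans. apply Cmod_triangle. rewrite Cmod_opp.
    pose proof (Cmod_Wt w n Hw). pose proof (Cmod_Wt z n Hz). lra. }
  assert (Exy : ex_series y).
  { apply (ex_series_bound _ (fun n => 2 * aa ^ n)). intros n. rewrite Rabs_right. auto.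
    apply Rle_ge, Cmod_ge_0. apply ex_series_aa_scal. }
  eapply Rle_lt_trans. apply (Cmod_CS_le _ y). intros; apply Rle_refl. exact Exy.
  rewrite (Series_incr_n y N) by (unfold N; lia || exact Exy).
  assert (Htail : Series (fun k => y (N + k)%nat) <= 20 * aa ^ N).
  { apply Rle_trans with (Series (fun k => (2 * aa ^ N) * aa ^ k)).
    apply Series_le. intros k. split. apply Cmod_ge_0. eapply Rle_trans. apply Hy2.
    rewrite pow_add. lra. apply ex_series_aa_scal.
    rewrite Series_scal_l. change (Series (pow aa)) with (Series (fun n => aa ^ n)).
    rewrite Series_aa. lra. }
  assert (Hhead : sum_f_R0 y (pred N) <= CN * d).
  { unfold CN. rewrite Rmult_comm, scal_sum. apply sum_Rle. intros n _.
    unfold y, Wt. replace (Cminus (Cmult (RtoC (aa ^ n)) (Cpow w (kk n))) (Cmult (RtoC (aa ^ n)) (Cpow z (kk n))))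
      with (Cmult (RtoC (aa ^ n)) (Cminus (Cpow w (kk n)) (Cpow z (kk n)))) by ring.
    rewrite Cmod_RtoC_mult, Rabs_right by (left; apply aa_pow_pos).
    pose proof (pow_diff_le w z (kk n) Hw Hz). rewrite INR_kk in H. fold d in H.
    pose proof (aa_pow_pos n). assert (aa ^ n <= 1). { rewrite <- (pow1 n). apply pow_incr. pose proof aa_pos; pose proof aa_lt1. lra. }
    pose proof (Cmod_ge_0 (Cminus (Cpow w (kk n)) (Cpow z (kk n)))).
    assert (0 <= 9 ^ n * d) by (apply Rmult_le_pos; [apply pow_le; lra| lra]). nra. }
  assert (CN * d <= eps / 4).
  { assert (d * (4 * (CN + 1)) < eps).
    { apply (Rmult_lt_compat_r (4 * (CN + 1))) in Hd; [|lra].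
      replace (eps / (4 * (CN + 1)) * (4 * (CN + 1))) with eps in Hd by (field; lra). lra. }
    nra. }
  lra.
Qed.

Lemma WW_holo (z : C) : Cmod z < 1 -> @is_derive C_AbsRing C_NormedModule WW z (DW z).
Proof.
  intros Hz. set (rho := (1 + Cmod z) / 2).
  pose proof (Cmod_ge_0 z) as Hz0.
  assert (Hrho : 0 < rho < 1) by (unfold rho; lra).
  destruct (pow_kk_bound rho Hrho) as [K [HK HKb]].
  assert (Hzr : Cmod z <= rho) by (unfold rho; lra).
  assert (Hdw : forall n, Cmod (DWt z n) <= aa ^ n * (K / rho)).
  { intros n. unfold DWt. rewrite Cmod_RtoC_mult, Rabs_right.
    2: { apply Rle_ge, Rmult_le_pos. left; apply aa_pow_pos. apply pos_INR. }
    destruct (kk_S n) as [j Hj]. rewrite Hj. simpl pred.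
    pose proof (Cmod_pow_le z rho j Hzr).
    assert (INR (S j) * rho ^ j <= K / rho).
    { apply (Rmult_le_reg_r rho). lra. replace (K / rho * rho) with K by (field; lra).
      specialize (HKb (S j)). pose proof (pos_INR j). rewrite S_INR in *.
      replace (rho ^ S j) with (rho ^ j * rho) in HKb by (simpl; ring).
      assert (0 <= rho ^ j) by (apply pow_le; lra).
      assert (0 <= (INR j + 1) * (rho ^ j * rho)) by (apply Rmult_le_pos; nra).
      nra. }
    pose proof (aa_pow_pos n). pose proof (Cmod_ge_0 (Cpow z j)).
    pose proof (pos_INR (S j)).
    replace (aa ^ n * INR (S j) * Cmod (Cpow z j)) with (aa ^ n * (INR (S j) * Cmod (Cpow z j))) by ring.
    apply Rmult_le_compat_l. lra. eapply Rle_trans; [|exact H0]. apply Rmult_le_compat_l; lra. }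
  assert (Csd : csum (DWt z)).
  { apply (csum_bound _ (fun n => aa ^ n * (K / rho))). exact Hdw.
    apply (ex_series_scal_r (K / rho) (fun n => aa ^ n)). apply ex_series_aa. }
  apply derive_from_quad.
  exists (rho - Cmod z), (20 * (K / rho ^ 2)). split. unfold rho; lra. split.
  { apply Rmult_le_pos. lra. apply Rdiv_le_0_compat. lra. apply pow_lt; lra. }
  intros w Hw.
  assert (Hwr : Cmod w <= rho).
  { replace w with (Cplus z (Cminus w z)) by ring. eapply Rle_trans. apply Cmod_triangle. lra. }
  assert (Hw1 : Cmod w <= 1) by lra. assert (Hz1 : Cmod z <= 1) by lra.
  unfold WW, DW.
  rewrite <- CS_minus by (apply csum_Wt; auto).
  rewrite (Cmult_comm (Cminus w z)). rewrite <- CS_mult_r by exact Csd.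
  rewrite <- CS_minus.
  2: { apply csum_minus; apply csum_Wt; auto. }
  2: { apply (csum_bound _ (fun n => aa ^ n * (K / rho) * Cmod (Cminus w z))).
       intros n. rewrite Cmod_mult. apply Rmult_le_compat_r. apply Cmod_ge_0. apply Hdw.
       apply (ex_series_scal_r (Cmod (Cminus w z)) (fun n => aa ^ n * (K / rho))).
       apply (ex_series_scal_r (K / rho) (fun n => aa ^ n)). apply ex_series_aa. }
  set (d := Cmod (Cminus w z)).
  assert (Hterm : forall n, Cminus (Cminus (Wt w n) (Wt z n)) (Cmult (DWt z n) (Cminus w z))
                  = Cmult (RtoC (aa ^ n)) (Eterm w z (kk n))).
  { intros n. unfold Wt, DWt, Eterm. rewrite RtoC_mult. ring. }
  eapply Rle_trans. apply (Cmod_CS_le _ (fun n => aa ^ n * (K / rho ^ 2 * d ^ 2))).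
  - intros n. rewrite Hterm, Cmod_RtoC_mult, Rabs_right by (left; apply aa_pow_pos).
    apply Rmult_le_compat_l. left; apply aa_pow_pos.
    pose proof (Eterm_bound w z rho (kk n) ltac:(lra) Hwr Hzr). fold d in H.
    specialize (HKb (kk n)).
    assert (Hr2 : 0 < rho ^ 2) by (apply pow_lt; lra).
    apply (Rmult_le_reg_l (rho ^ 2)). exact Hr2.
    replace (rho ^ 2 * (K / rho ^ 2 * d ^ 2)) with (K * d ^ 2) by (field; lra).
    eapply Rle_trans. exact H. apply Rmult_le_compat_r. apply pow_le, Cmod_ge_0. exact HKb.
  - apply (ex_series_scal_r (K / rho ^ 2 * d ^ 2) (fun n => aa ^ n)). apply ex_series_aa.
  - rewrite Series_scal_r. change (Series (pow aa)) with (Series (fun n => aa ^ n)).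
    rewrite Series_aa. right. ring.
Qed.

Lemma derive_cmult (F : C -> C) (z l c : C) :
  @is_derive C_AbsRing C_NormedModule F z l ->
  @is_derive C_AbsRing C_NormedModule (fun x => Cmult c (F x)) z (Cmult c l).
Proof.
  intros [_ H]. split. apply is_linear_scal_l.
  intros x Hx. pose proof (@is_filter_lim_locally_unique C_AbsRing (AbsRing_NormedModule C_AbsRing) z x Hx) as Hzx. subst x.
  specialize (H z Hx). intros eps.
  assert (He : 0 < eps / (Cmod c + 1)).
  { apply Rdiv_lt_0_compat. apply cond_pos. pose proof (Cmod_ge_0 c); lra. }
  specialize (H (mkposreal _ He)).
  apply locally_CA_inv in H. destruct H as [d [Hd H]]. apply locally_CA. exists d. split; auto.
  intros w Hw. specialize (H w Hw). simpl in H.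
  change (Cmod (Cminus (Cminus (F w) (F z)) (Cmult (Cminus w z) l)) <= eps / (Cmod c + 1) * Cmod (Cminus w z)) in H.
  change (Cmod (Cminus (Cminus (Cmult c (F w)) (Cmult c (F z))) (Cmult (Cminus w z) (Cmult c l))) <= eps * Cmod (Cminus w z)).
  replace (Cminus (Cminus (Cmult c (F w)) (Cmult c (F z))) (Cmult (Cminus w z) (Cmult c l)))
    with (Cmult c (Cminus (Cminus (F w) (F z)) (Cmult (Cminus w z) l))) by ring.
  rewrite Cmod_mult. pose proof (Cmod_ge_0 c). pose proof (Cmod_ge_0 (Cminus w z)).
  pose proof (cond_pos eps).
  eapply Rle_trans. apply Rmult_le_compat_l. lra. exact H.
  replace (Cmod c * (eps / (Cmod c + 1) * Cmod (Cminus w z))) with ((Cmod c / (Cmod c + 1)) * (eps * Cmod (Cminus w z))) by (field; lra).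
  assert (Cmod c / (Cmod c + 1) <= 1).
  { apply (Rmult_le_reg_r (Cmod c + 1)). lra. replace (Cmod c / (Cmod c + 1) * (Cmod c + 1)) with (Cmod c) by (field; lra). lra. }
  assert (0 <= eps * Cmod (Cminus w z)) by nra.
  assert (0 <= Cmod c / (Cmod c + 1)) by (apply Rdiv_le_0_compat; lra).
  nra.
Qed.

Lemma derive_cplus (F G : C -> C) (z l m : C) :
  @is_derive C_AbsRing C_NormedModule F z l ->
  @is_derive C_AbsRing C_NormedModule G z m ->
  @is_derive C_AbsRing C_NormedModule (fun x => Cplus (F x) (G x)) z (Cplus l m).
Proof.
  intros H1 H2. exact (@is_derive_plus C_AbsRing C_NormedModule F G z l m H1 H2).
Qed.

Lemma derive_rscale (r : R) (z : C) :
  @is_derive C_AbsRing C_NormedModule (fun x => Cmult (RtoC r) x) z (RtoC r).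
Proof.
  apply derive_from_quad. exists 1, 0. split. lra. split. lra. intros w _.
  replace (Cminus (Cminus (Cmult (RtoC r) w) (Cmult (RtoC r) z)) (Cmult (Cminus w z) (RtoC r))) with (RtoC 0) by ring.
  rewrite Cmod_0. pose proof (Cmod_ge_0 (Cminus w z)). nra.
Qed.

Lemma derive_rscale' (r : R) (z : C) :
  @is_derive C_AbsRing (AbsRing_NormedModule C_AbsRing) (fun x => Cmult (RtoC r) x) z (RtoC r).
Proof.
  split. apply is_linear_scal_l.
  intros x Hx. pose proof (@is_filter_lim_locally_unique C_AbsRing (AbsRing_NormedModule C_AbsRing) z x Hx) as Hzx. subst x.
  intros eps. apply locally_CA. exists 1. split. lra. intros w _.
  change (Cmod (Cminus (Cminus (Cmult (RtoC r) w) (Cmult (RtoC r) z)) (Cmult (Cminus w z) (RtoC r))) <= eps * Cmod (Cminus w z)).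
  replace (Cminus (Cminus (Cmult (RtoC r) w) (Cmult (RtoC r) z)) (Cmult (Cminus w z) (RtoC r))) with (RtoC 0) by ring.
  rewrite Cmod_0. pose proof (Cmod_ge_0 (Cminus w z)). pose proof (cond_pos eps). nra.
Qed.

Lemma derive_comp_r (f : C -> C) (r : R) (z l : C) :
  @is_derive C_AbsRing C_NormedModule f (Cmult (RtoC r) z) l ->
  @is_derive C_AbsRing C_NormedModule (fun x => f (Cmult (RtoC r) x)) z (Cmult (RtoC r) l).
Proof.
  intros H. exact (@is_derive_comp C_AbsRing C_NormedModule f (fun x => Cmult (RtoC r) x) z l (RtoC r) H (derive_rscale' r z)).
Qed.

Lemma Cmod_rscale (r : R) (z : C) : 0 <= r -> Cmod (Cmult (RtoC r) z) = r * Cmod z.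
Proof. intros H. rewrite Cmod_RtoC_mult, Rabs_right by lra. reflexivity. Qed.

Lemma unif_approx (f : C -> C) : continuous_on_closed_disk f ->
  forall eps, 0 < eps -> exists r, 0 < r < 1 /\
    forall z, closed_disk z -> Cmod (Cminus (f (Cmult (RtoC r) z)) (f z)) < eps.
Proof.
  intros Hf eps Heps.
  assert (Hex : forall u v : R, exists dl : posreal,
     (Cmod (u, v) <= 1 -> forall w, closed_disk w -> Cmod (Cminus w (u, v)) < 4 * dl ->
        Cmod (Cminus (f w) (f (u, v))) < eps / 2) /\
     (1 < Cmod (u, v) -> 4 * dl <= Cmod (u, v) - 1)).
  { intros u v. destruct (Rle_lt_dec (Cmod (u, v)) 1) as [Hin|Hout].
    - destruct (Hf (u, v) Hin (eps / 2) ltac:(lra)) as [d0 [Hd0 H0]].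
      exists (mkposreal (d0 / 4) ltac:(lra)). simpl. split.
      + intros _ w Hw Hlt. apply H0; auto. lra.
      + intros; lra.
    - exists (mkposreal ((Cmod (u, v) - 1) / 4) ltac:(lra)). simpl. split; intros; lra. }
  set (gauge := fun u v => proj1_sig (constructive_indefinite_description _ (Hex u v))).
  assert (Hg : forall u v, 
     (Cmod (u, v) <= 1 -> forall w, closed_disk w -> Cmod (Cminus w (u, v)) < 4 * gauge u v ->
        Cmod (Cminus (f w) (f (u, v))) < eps / 2) /\
     (1 < Cmod (u, v) -> 4 * gauge u v <= Cmod (u, v) - 1)).
  { intros u v. unfold gauge. destruct (constructive_indefinite_description _ (Hex u v)) as [x Hx]. exact Hx. }
  destruct (compactness_value_2d (-1) 1 (-1) 1 gauge) as [d Hd].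
  set (r := Rmax (1/2) (1 - d / 2)).
  pose proof (cond_pos d) as Hdpos.
  assert (Hr : 0 < r < 1).
  { unfold r. split. eapply Rlt_le_trans; [|apply Rmax_l]. lra. apply Rmax_lub_lt; lra. }
  assert (Hr2 : 1 - r <= d / 2) by (unfold r; pose proof (Rmax_r (1/2) (1 - d/2)); lra).
  exists r. split; auto.
  intros [x y] Hz. unfold closed_disk in Hz.
  assert (Hx : -1 <= x <= 1) by (pose proof (Re_le_Cmod (x, y)); simpl in *; apply Rabs_le_between; lra).
  assert (Hy : -1 <= y <= 1) by (pose proof (Im_le_Cmod (x, y)); simpl in *; apply Rabs_le_between; lra).
  specialize (Hd x y Hx Hy). apply NNPP in Hd.
  destruct Hd as [u [v [Hu [Hv [Hxu [Hyv Hdg]]]]]].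
  destruct (Hg u v) as [Hin Hout].
  assert (Hzt : Cmod (Cminus (x, y) (u, v)) < 2 * gauge u v).
  { unfold Cminus, Cplus, Copp; simpl. eapply Rle_lt_trans. apply Cmod_le_sum. 
    replace (x + - u) with (x - u) by ring. replace (y + - v) with (y - v) by ring. lra. }
  destruct (Rle_lt_dec (Cmod (u, v)) 1) as [Hin1|Hout1].
  2: { exfalso. specialize (Hout Hout1).
       pose proof (Cmod_tri3 (u, v) (x, y) (RtoC 0)).
       replace (Cminus (u, v) (RtoC 0)) with (u, v) in H by (unfold Cminus, Cplus, Copp, RtoC; simpl; f_equal; ring).
       replace (Cminus (x, y) (RtoC 0)) with (x, y) in H by (unfold Cminus, Cplus, Copp, RtoC; simpl; f_equal; ring).
       rewrite Cmod_minus_sym in H. lra. }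
  specialize (Hin Hin1).
  set (z := (x, y)) in *.
  assert (H1 : Cmod (Cminus (f z) (f (u, v))) < eps / 2) by (apply Hin; [exact Hz| lra]).
  assert (Hrz : Cmod (Cminus (Cmult (RtoC r) z) z) <= 1 - r).
  { replace (Cminus (Cmult (RtoC r) z) z) with (Cmult (RtoC (r - 1)) z) by (rewrite RtoC_minus; ring).
    rewrite Cmod_RtoC_mult. rewrite Rabs_left1 by lra. pose proof (Cmod_ge_0 z). nra. }
  assert (H2 : Cmod (Cminus (f (Cmult (RtoC r) z)) (f (u, v))) < eps / 2).
  { apply Hin. unfold closed_disk. rewrite Cmod_rscale by lra. pose proof (Cmod_ge_0 z). nra.
    pose proof (Cmod_tri3 (Cmult (RtoC r) z) z (u, v)). lra. }
  pose proof (Cmod_tri3 (f (Cmult (RtoC r) z)) (f (u, v)) (f z)).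
  rewrite (Cmod_minus_sym (f (u, v)) (f z)) in H. lra.
Qed.

Lemma Re_minus (a b : C) : Re (Cminus a b) = Re a - Re b.
Proof. destruct a, b; unfold Re, Cminus, Cplus, Copp; simpl; ring. Qed.
Lemma Im_minus (a b : C) : Im (Cminus a b) = Im a - Im b.
Proof. destruct a, b; unfold Im, Cminus, Cplus, Copp; simpl; ring. Qed.

Lemma circle_cont (g : C -> C) : continuous_on_closed_disk g -> forall y,
  continuity_pt (fun t => Re (on_circle g t)) y /\ continuity_pt (fun t => Im (on_circle g t)) y.
Proof.
  intros Hg y. split; apply continuity_pt_eps; intros eps Heps;
  destruct (Hg (cos y, sin y) (closed_disk_cis y) eps Heps) as [d [Hd H]];
  exists d; split; auto; intros t Ht; unfold on_circle;
  (eapply Rle_lt_trans; [|apply (H (cos t, sin t) (closed_disk_cis t)); eapply Rle_lt_trans; [apply Cmod_cis_diff|exact Ht]]).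
  - rewrite <- Re_minus. apply Re_le_Cmod.
  - rewrite <- Im_minus. apply Im_le_Cmod.
Qed.

Lemma cont_plus (F G : C -> C) : continuous_on_closed_disk F -> continuous_on_closed_disk G ->
  continuous_on_closed_disk (fun z => Cplus (F z) (G z)).
Proof.
  intros HF HG z Hz eps Heps.
  destruct (HF z Hz (eps/2) ltac:(lra)) as [d1 [Hd1 H1]].
  destruct (HG z Hz (eps/2) ltac:(lra)) as [d2 [Hd2 H2]].
  exists (Rmin d1 d2). split. apply Rmin_glb_lt; auto.
  intros w Hw Hwz. specialize (H1 w Hw ltac:(eapply Rlt_le_trans; [exact Hwz|apply Rmin_l])).
  specialize (H2 w Hw ltac:(eapply Rlt_le_trans; [exact Hwz|apply Rmin_r])).
  replace (Cminus (Cplus (F w) (G w)) (Cplus (F z) (G z))) with (Cplus (Cminus (F w) (F z)) (Cminus (G w) (G z))) by ring.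
  eapply Rle_lt_trans. apply Cmod_triangle. lra.
Qed.

Lemma cont_cmult (F : C -> C) (c : C) : continuous_on_closed_disk F ->
  continuous_on_closed_disk (fun z => Cmult c (F z)).
Proof.
  intros HF z Hz eps Heps.
  pose proof (Cmod_ge_0 c).
  destruct (HF z Hz (eps / (Cmod c + 1)) ltac:(apply Rdiv_lt_0_compat; lra)) as [d [Hd H1]].
  exists d. split; auto. intros w Hw Hwz. specialize (H1 w Hw Hwz).
  replace (Cminus (Cmult c (F w)) (Cmult c (F z))) with (Cmult c (Cminus (F w) (F z))) by ring.
  rewrite Cmod_mult. pose proof (Cmod_ge_0 (Cminus (F w) (F z))).
  apply Rle_lt_trans with ((Cmod c + 1) * Cmod (Cminus (F w) (F z))). nra.
  apply (Rmult_lt_compat_l (Cmod c + 1)) in H1; [|lra].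
  replace ((Cmod c + 1) * (eps / (Cmod c + 1))) with eps in H1 by (field; lra). lra.
Qed.

Definition fr (f : C -> C) (r : R) : C -> C := fun z => f (Cmult (RtoC r) z).

Lemma cont_fr (f : C -> C) (r : R) : 0 < r < 1 -> continuous_on_closed_disk f ->
  continuous_on_closed_disk (fr f r).
Proof.
  intros Hr Hf z Hz eps Heps. unfold closed_disk in *.
  assert (Hrz : closed_disk (Cmult (RtoC r) z)).
  { unfold closed_disk. rewrite Cmod_rscale by lra. pose proof (Cmod_ge_0 z). nra. }
  destruct (Hf _ Hrz eps Heps) as [d [Hd H]]. exists d. split; auto.
  intros w Hw Hwz. unfold fr. apply H.
  unfold closed_disk. rewrite Cmod_rscale by lra. pose proof (Cmod_ge_0 w). nra.
  replace (Cminus (Cmult (RtoC r) w) (Cmult (RtoC r) z)) with (Cmult (RtoC r) (Cminus w z)) by ring.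
  rewrite Cmod_rscale by lra. pose proof (Cmod_ge_0 (Cminus w z)). nra.
Qed.

Lemma holo_fr (f : C -> C) (r : R) : 0 < r < 1 -> holomorphic_on_open_disk f ->
  forall z, Cmod z <= 1 -> exists l, @is_derive C_AbsRing C_NormedModule (fr f r) z l.
Proof.
  intros Hr Hf z Hz. destruct (Hf (Cmult (RtoC r) z)) as [l Hl].
  { unfold open_disk. rewrite Cmod_rscale by lra. pose proof (Cmod_ge_0 z). nra. }
  exists (Cmult (RtoC r) l). apply derive_comp_r. exact Hl.
Qed.

Lemma limsup_ext (u u' : R -> R) (theta : R) : (forall y, u y = u' y) ->
  limsup_right_infinite u theta -> limsup_right_infinite u' theta.
Proof.
  intros E H M d Hd. destruct (H M d Hd) as [y [Hy H2]]. exists y. split; auto. rewrite <- !E. exact H2.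
Qed.

Lemma limsup_combine (h w : R -> R) (theta c L dL : R) : 0 < c -> 0 < dL ->
  (forall y, theta < y < theta + dL -> Rabs (h y - h theta) <= L * (y - theta)) ->
  (forall M delta, 0 < delta -> exists y, theta < y < theta + delta /\ M * (y - theta) < Rabs (w y - w theta)) ->
  limsup_right_infinite (fun y => h y + c * w y) theta.
Proof.
  intros Hc HdL Hh Hw M delta Hdelta.
  destruct (Hw ((Rabs M + Rabs L) / c) (Rmin delta dL) ltac:(apply Rmin_glb_lt; lra)) as [y [[Hy1 Hy2] Hy3]].
  exists y. split. split. lra. pose proof (Rmin_l delta dL). lra.
  assert (Hy4 : y < theta + dL) by (pose proof (Rmin_r delta dL); lra).
  specialize (Hh y ltac:(lra)).
  set (D := h y + c * w y - (h theta + c * w theta)).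
  assert (HD : c * Rabs (w y - w theta) - Rabs (h y - h theta) <= Rabs D).
  { unfold D. replace (h y + c * w y - (h theta + c * w theta)) with (c * (w y - w theta) - - (h y - h theta)) by ring.
    pose proof (Rabs_triang_inv (c * (w y - w theta)) (- (h y - h theta))).
    rewrite Rabs_mult, Rabs_Ropp, (Rabs_right c) in H by lra. lra. }
  assert (Hc2 : (Rabs M + Rabs L) * (y - theta) < c * Rabs (w y - w theta)).
  { apply (Rmult_lt_compat_l c) in Hy3; [|lra].
    replace (c * ((Rabs M + Rabs L) / c * (y - theta))) with ((Rabs M + Rabs L) * (y - theta)) in Hy3 by (field; lra). lra. }
  assert (HL : L * (y - theta) <= Rabs L * (y - theta)) by (apply Rmult_le_compat_r; [lra| apply Rle_abs]).
  assert (HM : Rabs M * (y - theta) < Rabs D) by lra.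
  unfold Rdiv. rewrite Rabs_mult, Rabs_Rinv by lra. rewrite (Rabs_right (y - theta)) by lra.
  apply Rle_lt_trans with (Rabs M). apply Rle_abs.
  apply (Rmult_lt_reg_r (y - theta)). lra. rewrite Rmult_assoc, Rinv_l by lra. lra.
Qed.

Definition gg (f : C -> C) (r c : R) : C -> C :=
  fun z => Cplus (fr f r z) (Cmult (RtoC c) (WW z)).

Lemma gg_A0 (f : C -> C) (r c : R) : 0 < r < 1 -> A0 f -> A0 (gg f r c).
Proof.
  intros Hr [Hc [Hh H0]]. split; [|split].
  - apply cont_plus. apply cont_fr; auto. apply cont_cmult. apply WW_cont.
  - intros z Hz. unfold open_disk in Hz.
    destruct (holo_fr f r Hr Hh z ltac:(lra)) as [l Hl].
    exists (Cplus l (Cmult (RtoC c) (DW z))). unfold gg.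
    apply derive_cplus. exact Hl. apply derive_cmult. apply WW_holo. exact Hz.
  - unfold gg, fr. replace (Cmult (RtoC r) (0, 0)) with ((0, 0) : C) by (unfold Cmult, RtoC; simpl; f_equal; ring).
    rewrite H0. pose proof WW_zero as HW. unfold RtoC in HW. rewrite HW.
    unfold Cplus, Cmult, RtoC; simpl; f_equal; ring.
Qed.

Lemma lip_circle (F : C -> C) (theta : R) :
  (exists l, @is_derive C_AbsRing C_NormedModule F (cos theta, sin theta) l) ->
  exists L dL, 0 < dL /\ forall y, theta < y < theta + dL ->
    Cmod (Cminus (F (cos y, sin y)) (F (cos theta, sin theta))) <= L * (y - theta).
Proof.
  intros [l Hl]. destruct (deriv_lip F _ l Hl) as [d [Hd H]].
  exists (Cmod l + 1), d. split; auto. intros y Hy.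
  pose proof (Cmod_cis_diff y theta). rewrite Rabs_right in H0 by lra.
  eapply Rle_trans. apply H. lra. apply Rmult_le_compat_l. pose proof (Cmod_ge_0 l). lra. exact H0.
Qed.

Lemma gg_Z (f : C -> C) (r c : R) : 0 < r < 1 -> 0 < c -> A0 f -> in_Z (gg f r c).
Proof.
  intros Hr Hc HA. pose proof (gg_A0 f r c Hr HA) as [Hgc _].
  destruct HA as [Hfc [Hfh Hf0]]. split.
  - apply circle_cont. exact Hgc.
  - intros theta.
    destruct (lip_circle (fr f r) theta (holo_fr f r Hr Hfh (cos theta, sin theta) ltac:(rewrite Cmod_cis; lra))) as [L [dL [HdL HL]]].
    split.
    + apply (limsup_ext (fun y => Re (fr f r (cos y, sin y)) + c * uu y)).
      { intros y. unfold on_circle, gg. rewrite WW_circle. unfold Re, Cplus, Cmult, RtoC; simpl. ring. }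
      apply (limsup_combine _ _ theta c L dL Hc HdL).
      * intros y Hy. rewrite <- Re_minus. eapply Rle_trans. apply Re_le_Cmod. apply HL; auto.
      * intros M delta Hd. apply weier_u; auto.
    + apply (limsup_ext (fun y => Im (fr f r (cos y, sin y)) + c * vv y)).
      { intros y. unfold on_circle, gg. rewrite WW_circle. unfold Im, Cplus, Cmult, RtoC; simpl. ring. }
      apply (limsup_combine _ _ theta c L dL Hc HdL).
      * intros y Hy. rewrite <- Im_minus. eapply Rle_trans. apply Im_le_Cmod. apply HL; auto.
      * intros M delta Hd. apply weier_v; auto.
Qed.

Lemma density : dense_in_A0 (fun f => A0 f /\ in_Z f).
Proof.
  intros f HA eps Heps.
  destruct (unif_approx f (proj1 HA) (eps / 2) ltac:(lra)) as [r [Hr Hap]].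
  set (c := eps / 50).
  exists (gg f r c). split. apply gg_A0; auto. split. split. apply gg_A0; auto.
  apply gg_Z; auto. unfold c; lra.
  intros z Hz. unfold gg.
  replace (Cminus (Cplus (fr f r z) (Cmult (RtoC c) (WW z))) (f z))
    with (Cplus (Cminus (fr f r z) (f z)) (Cmult (RtoC c) (WW z))) by ring.
  eapply Rle_lt_trans. apply Cmod_triangle.
  rewrite Cmod_rscale by (unfold c; lra).
  pose proof (WW_bound z Hz). specialize (Hap z Hz). unfold fr.
  assert (c * Cmod (WW z) <= c * 20) by (apply Rmult_le_compat_l; [unfold c; lra| auto]).
  unfold c in *. lra.
Qed.

Lemma sin_per_Z (x : R) (q : Z) : sin (x + 2 * IZR q * PI) = sin x.
Proof.
  destruct (Z_le_gt_dec 0 q).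
  - rewrite <- (Z2Nat.id q) by lia. rewrite <- INR_IZR_INZ. apply sin_period.
  - replace q with (- Z.of_nat (Z.to_nat (- q)))%Z by lia.
    rewrite opp_IZR, <- INR_IZR_INZ.
    set (k := Z.to_nat (-q)).
    rewrite <- (sin_period (x + 2 * - INR k * PI) k). f_equal. ring.
Qed.

Lemma on_circle_per (g : C -> C) (x : R) (q : Z) :
  on_circle g (x + 2 * IZR q * PI) = on_circle g x.
Proof. unfold on_circle. rewrite cos_per_Z, sin_per_Z. reflexivity. Qed.

Definition Ucond (u : R -> R) (n : nat) : Prop :=
  exists eps, 0 < eps /\ forall theta, exists y, theta < y < theta + / (INR n + 1) /\
    INR n * (y - theta) + eps < Rabs (u y - u theta).

Lemma Ucond_perturb (u u' : R -> R) (n : nat) (eps : R) : 0 < eps ->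
  (forall theta, exists y, theta < y < theta + / (INR n + 1) /\
    INR n * (y - theta) + eps < Rabs (u y - u theta)) ->
  (forall t, Rabs (u' t - u t) < eps / 4) -> Ucond u' n.
Proof.
  intros He H Hp. exists (eps / 2). split. lra. intros theta.
  destruct (H theta) as [y [Hy H2]]. exists y. split; auto.
  pose proof (Hp y). pose proof (Hp theta).
  assert (Rabs (u y - u theta) <= Rabs (u' y - u' theta) + Rabs (u' y - u y) + Rabs (u' theta - u theta)).
  { replace (u y - u theta) with ((u' y - u' theta) + (- (u' y - u y)) + (u' theta - u theta)) by ring.
    eapply Rle_trans. apply Rabs_triang. rewrite <- (Rabs_Ropp (u' y - u y)).
    pose proof (Rabs_triang (u' y - u' theta) (- (u' y - u y))). lra. }
  lra.
Qed.

Lemma Ucond_limsup (u : R -> R) : (forall n, Ucond u n) -> forall theta, limsup_right_infinite u theta.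
Proof.
  intros H theta M delta Hd.
  destruct (INR_unbounded (Rmax (Rabs M) (/ delta))) as [n Hn].
  destruct (H n) as [eps [He H2]]. destruct (H2 theta) as [y [[Hy1 Hy2] Hy3]].
  pose proof (Rmax_l (Rabs M) (/ delta)). pose proof (Rmax_r (Rabs M) (/ delta)).
  pose proof (pos_INR n).
  exists y. split. split. lra.
  { assert (/ (INR n + 1) < delta).
    { rewrite <- (Rinv_inv delta). apply Rinv_lt_contravar. 
      apply Rmult_lt_0_compat. apply Rinv_0_lt_compat; lra. lra. lra. }
    lra. }
  unfold Rdiv. rewrite Rabs_mult, Rabs_Rinv by lra. rewrite (Rabs_right (y - theta)) by lra.
  apply Rle_lt_trans with (Rabs M). apply Rle_abs.
  apply (Rmult_lt_reg_r (y - theta)). lra. rewrite Rmult_assoc, Rinv_l by lra.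
  assert (Rabs M * (y - theta) <= INR n * (y - theta)) by (apply Rmult_le_compat_r; lra).
  lra.
Qed.

Lemma Ucond_of_Z (u : R -> R) :
  (forall t, continuity_pt u t) ->
  (forall x (q : Z), u (x + 2 * IZR q * PI) = u x) ->
  (forall theta, limsup_right_infinite u theta) -> forall n, Ucond u n.
Proof.
  intros Hc Hper Hl n.
  set (h := / (INR n + 1)).
  pose proof (pos_INR n) as Hn0.
  assert (Hh : 0 < h) by (unfold h; apply Rinv_0_lt_compat; lra).
  set (P := fun t (rho : posreal) => forall t', Rabs (t' - t) < rho ->
     exists y, t' < y < t' + h /\ INR n * (y - t') + rho < Rabs (u y - u t')).
  assert (Hex : forall t, exists rho : posreal, P t rho).
  { intros t. destruct (Hl t (INR n + 1) h Hh) as [y [[Hy1 Hy2] Hy3]].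
    set (mu := y - t).
    assert (Hmu : 0 < mu) by (unfold mu; lra).
    unfold Rdiv in Hy3. rewrite Rabs_mult, Rabs_Rinv in Hy3 by lra.
    rewrite (Rabs_right (y - t)) in Hy3 by lra.
    assert (Hq : (INR n + 1) * mu < Rabs (u y - u t)).
    { pose proof (Rmult_lt_compat_r mu _ _ Hmu Hy3) as Hy4. unfold mu in *.
      replace (Rabs (u y - u t) * / (y - t) * (y - t)) with (Rabs (u y - u t)) in Hy4 by (field; lra). lra. }
    destruct (Hc t (mu / 4) ltac:(lra)) as [dc [Hdc Hcc]].
    set (rho := Rmin (mu / (4 * (INR n + 1))) (Rmin dc (t + h - y))).
    assert (Hrho : 0 < rho).
    { unfold rho. apply Rmin_glb_lt. apply Rdiv_lt_0_compat; lra. apply Rmin_glb_lt; lra. }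
    exists (mkposreal rho Hrho). intros t' Ht'. simpl in Ht'.
    assert (R1 : rho <= mu / (4 * (INR n + 1))) by apply Rmin_l.
    assert (R2 : rho <= dc) by (eapply Rle_trans; [apply Rmin_r| apply Rmin_l]).
    assert (R3 : rho <= t + h - y) by (eapply Rle_trans; [apply Rmin_r| apply Rmin_r]).
    assert (R4 : rho * (4 * (INR n + 1)) <= mu).
    { apply (Rmult_le_compat_r (4 * (INR n + 1))) in R1; [|lra].
      replace (mu / (4 * (INR n + 1)) * (4 * (INR n + 1))) with mu in R1 by (field; lra). lra. }
    assert (Htt : - rho < t' - t < rho) by (apply Rabs_def2 in Ht'; lra).
    assert (R5 : rho <= mu / 4) by nra.
    assert (Hmy : y = t + mu) by (unfold mu; ring).
    exists y. split. split. lra. lra.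
    assert (Hct : Rabs (u t' - u t) < mu / 4).
    { destruct (Req_dec t' t) as [E|E]. rewrite E, Rminus_eq_0, Rabs_R0. lra.
      apply Hcc. split. split. exact I. auto. simpl. unfold R_dist. lra. }
    pose proof (Rabs_triang (u y - u t') (u t' - u t)).
    replace (u y - u t' + (u t' - u t)) with (u y - u t) in H by ring.
    simpl. 
    assert (INR n * (y - t') <= INR n * mu + INR n * rho).
    { unfold mu. replace (y - t') with ((y - t) + (t - t')) by ring. rewrite Rmult_plus_distr_l.
      apply Rplus_le_compat_l. apply Rmult_le_compat_l; lra. }
    nra. }
  set (gauge := fun t => proj1_sig (constructive_indefinite_description _ (Hex t))).
  assert (Hg : forall t, P t (gauge t)).
  { intros t. unfold gauge. destruct (constructive_indefinite_description _ (Hex t)) as [x Hx]. exact Hx. }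
  destruct (compactness_value_1d 0 (2 * PI) gauge) as [d Hd].
  exists d. split. apply cond_pos.
  assert (Hbase : forall theta, 0 <= theta <= 2 * PI -> exists y, theta < y < theta + h /\
    INR n * (y - theta) + d < Rabs (u y - u theta)).
  { intros theta Hth. specialize (Hd theta Hth). apply NNPP in Hd.
    destruct Hd as [t [Ht [Hdt Hdd]]].
    destruct (Hg t theta Hdt) as [y [Hy Hy2]]. exists y. split; auto. lra. }
  intros theta. pose proof PI_RGT_0.
  set (m := (up (theta / (2 * PI)) - 1)%Z).
  destruct (archimed (theta / (2 * PI))) as [A1 A2].
  assert (Hm : IZR m = IZR (up (theta / (2 * PI))) - 1) by (unfold m; rewrite minus_IZR; reflexivity).
  set (th0 := theta - 2 * IZR m * PI).
  assert (Hth0 : 0 <= th0 <= 2 * PI).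
  { unfold th0. rewrite Hm.
    assert (E : theta = (theta / (2 * PI)) * (2 * PI)) by (field; lra).
    split; nra. }
  destruct (Hbase th0 Hth0) as [y0 [Hy0 Hy02]].
  exists (y0 + 2 * IZR m * PI).
  assert (E1 : theta = th0 + 2 * IZR m * PI) by (unfold th0; ring).
  rewrite Hper. rewrite E1. rewrite Hper.
  fold h. split. lra. replace (y0 + 2 * IZR m * PI - (th0 + 2 * IZR m * PI)) with (y0 - th0) by ring. exact Hy02.
Qed.

Definition UU (n : nat) (f : C -> C) : Prop :=
  Ucond (fun t => Re (on_circle f t)) n /\ Ucond (fun t => Im (on_circle f t)) n.

Lemma UU_open (n : nat) : open_in_A0 (UU n).
Proof.
  intros f Hf [[e1 [He1 H1]] [e2 [He2 H2]]].
  exists (Rmin e1 e2 / 4). split. apply Rdiv_lt_0_compat. apply Rmin_glb_lt; auto. lra.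
  intros g Hg Hclose. pose proof (Rmin_l e1 e2). pose proof (Rmin_r e1 e2). split.
  - apply (Ucond_perturb (fun t => Re (on_circle f t)) _ n e1 He1 H1).
    intros t. unfold on_circle. rewrite <- Re_minus. eapply Rle_lt_trans. apply Re_le_Cmod.
    eapply Rlt_le_trans. apply Hclose. apply closed_disk_cis. lra.
  - apply (Ucond_perturb (fun t => Im (on_circle f t)) _ n e2 He2 H2).
    intros t. unfold on_circle. rewrite <- Im_minus. eapply Rle_lt_trans. apply Im_le_Cmod.
    eapply Rlt_le_trans. apply Hclose. apply closed_disk_cis. lra.
Qed.

Theorem proposition2p3 :
  let S := fun f : C -> C => A0 f /\ in_Z f in
  G_delta_in_A0 S /\ dense_in_A0 S.
Proof.
  intros S. split.
  - exists UU. split. apply UU_open.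
    intros f Hf. unfold S. split.
    + intros [_ [Hc Hl]] n. split.
      * apply Ucond_of_Z. intros t; apply (Hc t). 
        intros x q. rewrite on_circle_per. reflexivity. intros theta; apply (Hl theta).
      * apply Ucond_of_Z. intros t; apply (Hc t).
        intros x q. rewrite on_circle_per. reflexivity. intros theta; apply (Hl theta).
    + intros H. split; auto. split.
      * apply circle_cont. apply Hf.
      * intros theta. split; apply Ucond_limsup; intros n; apply (H n).
  - apply density.
Qed.
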